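(* Let $A_1,\dots,A_m\in\mathbb{S}^n$, $b\in\mathbb{R}^m$, $C\in\mathbb{S}^n$, and let Assumption 1 hold for some $p$, with $m'$ the associated dimension. Let $Y\in\mathcal{M}_p$ be a second-order critical point of (P). If $\operatorname{rank}(Y)<p$, or if $\operatorname{rank}(Y)=p$ and $\dim\mathcal{F}_{YY^\top}<\frac{p(p+1)}{2}-m'+p$, then $Y$ is globally optimal for (P) and $X=YY^\top$ is globally optimal for (SDP).
   Context: $\mathbb{S}^n$ is the space of real symmetric $n\times n$ matrices; $\langle U,V\rangle=\operatorname{tr}(U^\top V)$. $\mathcal{A}:\mathbb{S}^n\to\mathbb{R}^m$, $\mathcal{A}(X)_i=\langle A_i,X\rangle$, adjoint $\mathcal{A}^*(\nu)=\sum_i\nu_iA_i$. (SDP): minimize $\langle C,X\rangle$ over $X\in\mathcal{C}=\{X\in\mathbb{S}^n:\mathcal{A}(X)=b,\ X\succeq0\}$ (assumed non-empty). $\mathcal{M}_p=\{Y\in\mathbb{R}^{n\times p}:\mathcal{A}(YY^\top)=b\}$; (P): minimize $g(Y)=\langle CY,Y\rangle$ over $\mathcal{M}_p$. Assumption 1 (for $p$ with $\mathcal{M}_p\ne\emptyset$): either (a) $A_1Y,\dots,A_mY$ are linearly independent for all $Y\in\mathcal{M}_p$, or (b) $\operatorname{span}\{A_1Y,\dots,A_mY\}$ has constant dimension for all $Y$ in an open neighborhood of $\mathcal{M}_p$ in $\mathbb{R}^{n\times p}$; in either case $m'$ denotes the dimension of $\operatorname{span}\{A_1Y,\dots,A_mY\}$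 for $Y\in\mathcal{M}_p$. For $Y\in\mathcal{M}_p$: $T_Y=\{\dot Y:\langle A_iY,\dot Y\rangle=0\ \forall i\}$; $G_{ij}=\langle A_iY,A_jY\rangle$; $\mu=G^\dagger\mathcal{A}(CYY^\top)$; $S(Y)=C-\mathcal{A}^*(\mu)$. $Y$ is second-order critical if $S(Y)Y=0$ and $\langle\dot Y,S(Y)\dot Y\rangle\ge0$ for all $\dot Y\in T_Y$. A face of the convex set $\mathcal{C}$ is a convex subset $\mathcal{F}\subseteq\mathcal{C}$ such that every closed segment in $\mathcal{C}$ with a relative interior point in $\mathcal{F}$ has both endpoints in $\mathcal{F}$; for $X\in\mathcal{C}$, $\mathcal{F}_X$ is the unique face of $\mathcal{C}$ containing $X$ in its relative interior, and its dimension is that of its affine hull. *)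

(* Defs.v *)
From HB Require Import structures.
From mathcomp Require Import all_boot all_order all_algebra.
From mathcomp Require Import reals.
Set Implicit Arguments. Unset Strict Implicit. Unset Printing Implicit Defensive.
Import Order.TTheory GRing.Theory Num.Theory.
Local Open Scope ring_scope.

Definition inner (R : realType) (k l : nat) (U V : 'M[R]_(k, l)) : R :=
  \tr (U^T *m V).

Definition frob2 (R : realType) (k l : nat) (U : 'M[R]_(k, l)) : R := inner U U.

Definition symm (R : realType) (n : nat) (X : 'M[R]_n) : Prop := X^T = X.

Definition psd (R : realType) (n : nat) (X : 'M[R]_n) : Prop :=
  forall v : 'cV[R]_n, 0 <= (v^T *m X *m v) 0 0.

Definition Aop (R : realType) (n m : nat) (A : 'I_m -> 'M[R]_n) (X : 'M[R]_n)
  : 'cV[R]_m := \col_i inner (A i) X.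

Definition Aadj (R : realType) (n m : nat) (A : 'I_m -> 'M[R]_n) (nu : 'cV[R]_m)
  : 'M[R]_n := \sum_i nu i 0 *: A i.

Definition feasC (R : realType) (n m : nat) (A : 'I_m -> 'M[R]_n) (b : 'cV[R]_m)
  (X : 'M[R]_n) : Prop := symm X /\ Aop A X = b /\ psd X.

Definition Mp (R : realType) (n m p : nat) (A : 'I_m -> 'M[R]_n) (b : 'cV[R]_m)
  (Y : 'M[R]_(n, p)) : Prop := Aop A (Y *m Y^T) = b.

Definition gobj (R : realType) (n p : nat) (C : 'M[R]_n) (Y : 'M[R]_(n, p)) : R :=
  inner (C *m Y) Y.

Definition AYs (R : realType) (n m p : nat) (A : 'I_m -> 'M[R]_n) (Y : 'M[R]_(n, p))
  : seq 'M[R]_(n, p) := [seq A i *m Y | i <- enum 'I_m].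

Definition AYspan (R : realType) (n m p : nat) (A : 'I_m -> 'M[R]_n)
  (Y : 'M[R]_(n, p)) : {vspace 'M[R]_(n, p)} := (<< AYs A Y >>)%VS.

Definition Assumption1 (R : realType) (n m : nat) (p : nat) (A : 'I_m -> 'M[R]_n)
  (b : 'cV[R]_m) : Prop :=
  (forall Y : 'M[R]_(n, p), Mp A b Y -> free (AYs A Y))
  \/
  (* (b) constant dimension of the span on an open neighbourhood of M_p
     (an open set containing M_p: every Y in M_p has a Euclidean ball in it) *)
  (exists (U : 'M[R]_(n, p) -> Prop) (d : nat),
     (forall Z, U Z -> exists2 eps : R, 0 < eps &
                  forall W, frob2 (W - Z) < eps -> U W) /\
     (forall Y, Mp A b Y -> U Y) /\
     (forall Y, U Y -> \dim (AYspan A Y) = d)).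

Definition TY (R : realType) (n m p : nat) (A : 'I_m -> 'M[R]_n) (Y Yd : 'M[R]_(n, p))
  : Prop := forall i, inner (A i *m Y) Yd = 0.

Definition Gram (R : realType) (n m p : nat) (A : 'I_m -> 'M[R]_n) (Y : 'M[R]_(n, p))
  : 'M[R]_m := \matrix_(i, j) inner (A i *m Y) (A j *m Y).

Definition is_MP_pinv (R : realType) (m : nat) (G H : 'M[R]_m) : Prop :=
  [/\ G *m H *m G = G, H *m G *m H = H, (G *m H)^T = G *m H & (H *m G)^T = H *m G].

Definition Smat (R : realType) (n m p : nat) (A : 'I_m -> 'M[R]_n) (C : 'M[R]_n)
  (Y : 'M[R]_(n, p)) (H : 'M[R]_m) : 'M[R]_n :=
  C - Aadj A (H *m Aop A (C *m Y *m Y^T)).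

(* second-order criticality (H is the (unique) pseudo-inverse of G) *)
Definition soc (R : realType) (n m p : nat) (A : 'I_m -> 'M[R]_n) (C : 'M[R]_n)
  (Y : 'M[R]_(n, p)) : Prop :=
  exists H : 'M[R]_m, is_MP_pinv (Gram A Y) H /\
    Smat A C Y H *m Y = 0 /\
    (forall Yd, TY A Y Yd -> 0 <= inner Yd (Smat A C Y H *m Yd)).

Definition convexP (R : realType) (n : nat) (F : 'M[R]_n -> Prop) : Prop :=
  forall P Q (t : R), F P -> F Q -> 0 <= t -> t <= 1 -> F ((1 - t) *: P + t *: Q).

Definition is_face (R : realType) (n : nat) (K F : 'M[R]_n -> Prop) : Prop :=
  (forall X, F X -> K X) /\ convexP F /\
  (forall P Q : 'M[R]_n,
     (forall s : R, 0 <= s -> s <= 1 -> K ((1 - s) *: P + s *: Q)) ->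
     (exists2 t : R, 0 < t < 1 & F ((1 - t) *: P + t *: Q)) ->
     F P /\ F Q).

Definition diffs (R : realType) (n : nat) (X0 : 'M[R]_n) (s : seq 'M[R]_n)
  : seq 'M[R]_n := [seq W - X0 | W <- s].

Definition in_aff (R : realType) (n : nat) (F : 'M[R]_n -> Prop) (Z : 'M[R]_n) : Prop :=
  exists (X0 : 'M[R]_n) (s : seq 'M[R]_n),
    F X0 /\ (forall W, W \in s -> F W) /\
    (Z - X0) \in (<< diffs X0 s >>)%VS.

Definition relint (R : realType) (n : nat) (F : 'M[R]_n -> Prop) (X : 'M[R]_n) : Prop :=
  F X /\ exists2 eps : R, 0 < eps &
    forall Z, in_aff F Z -> frob2 (Z - X) < eps -> F Z.

Definition affdim (R : realType) (n : nat) (F : 'M[R]_n -> Prop) (d : nat) : Prop :=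
  (exists (X0 : 'M[R]_n) (s : seq 'M[R]_n),
     F X0 /\ (forall W, W \in s -> F W) /\
     \dim (<< diffs X0 s >>)%VS = d) /\
  (forall (X0 : 'M[R]_n) (s : seq 'M[R]_n),
     F X0 -> (forall W, W \in s -> F W) ->
     (\dim (<< diffs X0 s >>)%VS <= d)%N).

(* Main.v *)
Require Import Defs.
From HB Require Import structures.
From mathcomp Require Import all_boot all_order all_algebra.
From mathcomp Require Import reals.
From mathcomp Require Import ring lra zify.
From Stdlib Require Classical_Prop.
Set Implicit Arguments. Unset Strict Implicit. Unset Printing Implicit Defensive.
Import Order.TTheory GRing.Theory Num.Theory.
Local Open Scope ring_scope.

Section SecA.
Variable R : realType.

Lemma mul_self_ge0 (x : R) : 0 <= x * x.
Proof. by rewrite -expr2 sqr_ge0. Qed.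

Lemma innerE (k l : nat) (U V : 'M[R]_(k, l)) :
  inner U V = \sum_i \sum_j U i j * V i j.
Proof.
rewrite /inner /mxtrace exchange_big /=; apply: eq_bigr => j _.
rewrite mxE; apply: eq_bigr => i _; by rewrite !mxE.
Qed.

Lemma inner_sym (k l : nat) (U V : 'M[R]_(k, l)) : inner U V = inner V U.
Proof. rewrite !innerE; apply: eq_bigr => i _; apply: eq_bigr => j _; exact: mulrC. Qed.

Lemma innerDr (k l : nat) (U V W : 'M[R]_(k, l)) : inner U (V + W) = inner U V + inner U W.
Proof. by rewrite /inner mulmxDr mxtraceD. Qed.

Lemma innerZr (k l : nat) (U V : 'M[R]_(k, l)) a : inner U (a *: V) = a * inner U V.
Proof. by rewrite /inner -scalemxAr mxtraceZ. Qed.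

Lemma innerDl (k l : nat) (U V W : 'M[R]_(k, l)) : inner (V + W) U = inner V U + inner W U.
Proof. by rewrite inner_sym innerDr !(inner_sym U). Qed.

Lemma innerZl (k l : nat) (U V : 'M[R]_(k, l)) a : inner (a *: V) U = a * inner V U.
Proof. by rewrite inner_sym innerZr inner_sym. Qed.

Lemma innerNr (k l : nat) (U V : 'M[R]_(k, l)) : inner U (- V) = - inner U V.
Proof. by rewrite -scaleN1r innerZr mulN1r. Qed.

Lemma innerNl (k l : nat) (U V : 'M[R]_(k, l)) : inner (- V) U = - inner V U.
Proof. by rewrite -scaleN1r innerZl mulN1r. Qed.

Lemma innerBr (k l : nat) (U V W : 'M[R]_(k, l)) : inner U (V - W) = inner U V - inner U W.
Proof. by rewrite innerDr innerNr. Qed.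

Lemma innerBl (k l : nat) (U V W : 'M[R]_(k, l)) : inner (V - W) U = inner V U - inner W U.
Proof. by rewrite innerDl innerNl. Qed.

Lemma inner0r (k l : nat) (U : 'M[R]_(k, l)) : inner U 0 = 0.
Proof. by rewrite /inner mulmx0 mxtrace0. Qed.

Lemma inner0l (k l : nat) (U : 'M[R]_(k, l)) : inner 0 U = 0.
Proof. by rewrite inner_sym inner0r. Qed.

Lemma inner_sumr (k l : nat) (I : finType) (U : 'M[R]_(k, l)) (F : I -> 'M[R]_(k,l)) :
  inner U (\sum_i F i) = \sum_i inner U (F i).
Proof.
elim/big_rec2: _ => [|i x y _ H]; first exact: inner0r.
by rewrite innerDr H.
Qed.

Lemma inner_ge0 (k l : nat) (U : 'M[R]_(k, l)) : 0 <= inner U U.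
Proof. rewrite innerE; apply: sumr_ge0 => i _; apply: sumr_ge0 => j _; exact: mul_self_ge0. Qed.

Lemma inner_eq0 (k l : nat) (U : 'M[R]_(k, l)) : inner U U = 0 -> U = 0.
Proof.
rewrite innerE => /eqP; rewrite psumr_eq0 => [/allP H|i _]; last first.
  by apply: sumr_ge0 => j _; exact: mul_self_ge0.
apply/matrixP => i j; rewrite mxE.
have /implyP/(_ isT) := H i (mem_index_enum _).
rewrite psumr_eq0 => [/allP/(_ j (mem_index_enum _))|j' _]; last exact: mul_self_ge0.
by rewrite mulf_eq0 orbb => /eqP.
Qed.

Lemma qcs (a b c : R) : 0 <= a -> 0 <= c ->
  (forall s, 0 <= a + 2 * s * b + s * s * c) -> b * b <= a * c.
Proof.
move=> ha hc H.
have [c0|cpos] := eqVneq c 0.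
  subst c; have [b0|bn0] := eqVneq b 0; first by subst b; rewrite mul0r mulr0.
  have := H (- (a + 1) / (2 * b)).
  have -> : 2 * (- (a + 1) / (2 * b)) * b = - (a + 1).
    by field; rewrite bn0.
  rewrite mulr0 addr0; lra.
have cp : 0 < c by rewrite lt_def cpos hc.
have := H (- b / c).
have -> : a + 2 * (- b / c) * b + - b / c * (- b / c) * c = a - b * b / c.
  by field; rewrite cpos.
rewrite subr_ge0 ler_pdivrMr //.
Qed.

Lemma inner_cs (k l : nat) (U V : 'M[R]_(k, l)) :
  inner U V * inner U V <= inner U U * inner V V.
Proof.
apply: qcs; rewrite ?inner_ge0 // => s.
have := inner_ge0 (U + s *: V).
rewrite !innerDl !innerDr !innerZl !innerZr (inner_sym V U).
by move=> h; lra.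
Qed.

Lemma qformE (k : nat) (X : 'M[R]_k) (v : 'cV[R]_k) :
  (v^T *m X *m v) 0 0 = inner v (X *m v).
Proof. by rewrite /inner /mxtrace big_ord1 mulmxA. Qed.

Lemma inner_mulmx (k l q : nat) (U : 'M[R]_(k, l)) (X : 'M[R]_(k, q)) (V : 'M[R]_(q, l)) :
  inner U (X *m V) = inner (X^T *m U) V.
Proof. by rewrite /inner trmx_mul trmxK mulmxA. Qed.

Lemma psd_cs (k : nat) (X : 'M[R]_k) (v w : 'cV[R]_k) : symm X -> psd X ->
  inner w (X *m v) * inner w (X *m v) <= inner w (X *m w) * inner v (X *m v).
Proof.
move=> sX pX.
have q0 : forall u : 'cV[R]_k, 0 <= inner u (X *m u) by move=> u; rewrite -(qformE X u); exact: pX.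
apply: qcs; rewrite ?q0 // => s.
have := q0 (w + s *: v).
rewrite mulmxDr -scalemxAr !innerDl !innerDr !innerZl !innerZr.
have -> : inner v (X *m w) = inner w (X *m v).
  by rewrite inner_mulmx sX inner_sym.
by move=> h; lra.
Qed.

Lemma psd0 (k : nat) (X : 'M[R]_k) (v : 'cV[R]_k) : symm X -> psd X ->
  inner v (X *m v) = 0 -> X *m v = 0.
Proof.
move=> sX pX h; apply: inner_eq0.
have := psd_cs v (X *m v) sX pX; rewrite h mulr0.
move=> h2; nra.
Qed.

End SecA.

Section SecB.
Variable R : realType.

Lemma inner_delta (k : nat) (i : 'I_k) (V : 'cV[R]_k) :
  inner (delta_mx i (0 : 'I_1)) V = V i 0.
Proof.
rewrite innerE (bigD1 i) //= big_ord1 mxE !eqxx mul1r big1 ?addr0 // => j /negbTE ji.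
by rewrite big_ord1 mxE ji mul0r.
Qed.

Lemma mul_delta (k : nat) (X : 'M[R]_k) (i j : 'I_k) : (X *m delta_mx j (0 : 'I_1)) i 0 = X i j.
Proof. by rewrite -colE mxE. Qed.

Lemma inner11 (W V : 'M[R]_1) : inner W V = W 0 0 * V 0 0.
Proof. by rewrite innerE !big_ord1. Qed.

Lemma tr11 (W : 'M[R]_1) : \tr W = W 0 0.
Proof. by rewrite /mxtrace big_ord1. Qed.

Lemma inner_cv (k : nat) (x v : 'cV[R]_k) : inner x v = (x^T *m v) 0 0.
Proof. by rewrite /inner tr11. Qed.

Lemma psd_zero (k : nat) (X : 'M[R]_k) : (forall j, X j j = 0) -> symm X -> psd X -> X = 0.
Proof.
move=> H sX pX; apply/matrixP => i j; rewrite mxE -mul_delta psd0 ?mxE //.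
by rewrite inner_delta mul_delta H.
Qed.

Lemma psd_qf (k : nat) (X : 'M[R]_k) (v : 'cV[R]_k) : psd X -> 0 <= inner v (X *m v).
Proof. by move=> pX; rewrite -qformE; exact: pX. Qed.

Definition supp (k : nat) (X : 'M[R]_k) := [set j | X j j != 0].

Lemma tr_psd (k : nat) (S X : 'M[R]_k) : psd S -> symm X -> psd X -> 0 <= \tr (S *m X).
Proof.
move=> pS.
suff H : forall (N : nat) (X : 'M[R]_k), (#|supp X| <= N)%N -> symm X -> psd X ->
  0 <= \tr (S *m X) by apply: H (leqnn _).
elim=> [|N IH] {}X hN sX pX.
  rewrite (@psd_zero _ X) ?mulmx0 ?mxtrace0 // => j.
  apply/eqP; apply: contraTT hN => hj; rewrite -ltnNge card_gt0.
  by apply/set0Pn; exists j; rewrite inE.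
move: hN; rewrite /supp => hN.
have [e0|[k0 hk0]] := set_0Vmem (supp X).
  by rewrite (@psd_zero _ X) ?mulmx0 ?mxtrace0 // => j; apply/eqP;
     have := iffRL (setP _ _) e0 j; rewrite !inE => /negbT; rewrite negbK.
move: hk0; rewrite inE => hk0.
rewrite /supp in hN.
set a := X k0 k0.
have a_ge0 : 0 <= a by rewrite /a -(mul_delta X k0) -inner_delta; exact: psd_qf.
have a_gt0 : 0 < a by rewrite lt_def hk0 a_ge0.
set x := X *m delta_mx k0 (0 : 'I_1).
set X' := X - a^-1 *: (x *m x^T).
have xE : forall j, x j 0 = X j k0 by move=> j; rewrite /x mul_delta.
have X'E : forall i j, X' i j = X i j - a^-1 * (X i k0 * X j k0).
  have xxE : forall i j, (x *m x^T) i j = X i k0 * X j k0.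
    by move=> i j; rewrite mxE big_ord1 [x^T _ _]mxE !xE.
  move=> i j; rewrite /X' -xxE.
  move: (x *m x^T) => P.
  by rewrite !mxE.
have sX' : symm X'.
  by rewrite /symm /X' linearB linearZ /= trmx_mul trmxK sX.
have pX' : psd X'.
  move=> v; rewrite qformE /X' mulmxBl -scalemxAl innerBr innerZr.
  rewrite -mulmxA [X in _ * X]inner_mulmx inner11.
  have -> : (x^T *m v) 0 0 = inner (delta_mx k0 (0 : 'I_1)) (X *m v).
    by rewrite -inner_cv /x inner_mulmx sX inner_sym.
  have := psd_cs v (delta_mx k0 (0 : 'I_1)) sX pX.
  rewrite [inner _ (X *m delta_mx k0 (0 : 'I_1))]inner_delta mul_delta -/a.
  set b := inner _ _; set q := inner v _ => hb.
  by rewrite subr_ge0 mulrC ler_pdivrMr // [q * a]mulrC.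
have hlt : (#|supp X'| < #|supp X|)%N.
  apply: proper_card; apply/properP; split.
    apply/subsetP => j; rewrite !inE; apply: contraNneq => hj.
    have h1 : X *m delta_mx j (0 : 'I_1) = 0.
      by apply: psd0 => //; rewrite inner_delta mul_delta.
    have : X k0 j = 0 by rewrite -mul_delta h1 mxE.
    by rewrite -{1}sX mxE X'E hj => ->; rewrite mul0r mulr0 subr0.
  exists k0; first by rewrite inE.
  rewrite inE X'E -/a negbK mulrA mulVf ?mul1r ?subrr //.
have -> : X = X' + a^-1 *: (x *m x^T) by rewrite /X' subrK.
rewrite mulmxDr mxtraceD -scalemxAr mxtraceZ.
apply: addr_ge0; first by apply: IH => //; rewrite -ltnS; apply: leq_trans hlt hN.
apply: mulr_ge0; first by rewrite invr_ge0.
by rewrite mulmxA mxtrace_mulC mulmxA tr11; apply: pS.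
Qed.

End SecB.

Section SecC.
Variable R : realType.

Lemma AopD n m (A : 'I_m -> 'M[R]_n) X Z : Aop A (X + Z) = Aop A X + Aop A Z.
Proof. by apply/matrixP => i j; rewrite !mxE innerDr. Qed.
Lemma AopZ n m (A : 'I_m -> 'M[R]_n) a X : Aop A (a *: X) = a *: Aop A X.
Proof. by apply/matrixP => i j; rewrite !mxE innerZr. Qed.
Lemma AopN n m (A : 'I_m -> 'M[R]_n) X : Aop A (- X) = - Aop A X.
Proof. by apply/matrixP => i j; rewrite !mxE innerNr. Qed.
Lemma AopB n m (A : 'I_m -> 'M[R]_n) X Z : Aop A (X - Z) = Aop A X - Aop A Z.
Proof. by rewrite AopD AopN. Qed.
Lemma Aop0 n m (A : 'I_m -> 'M[R]_n) : Aop A 0 = 0.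
Proof. by apply/matrixP => i j; rewrite !mxE inner0r. Qed.

Lemma scal_bound (a e x : R) : 0 <= a -> 0 <= e -> e < 1 -> x * x <= e * (a * a) -> 0 <= a + x.
Proof. move=> ha he he1 h; nra. Qed.

Lemma inner_tr k l (U V : 'M[R]_(k, l)) : inner U^T V^T = inner U V.
Proof. by rewrite /inner trmxK -mxtrace_tr trmx_mul trmxK mxtrace_mulC. Qed.

Lemma frob_rank1 k (v : 'cV[R]_k) :
  inner (v *m v^T) (v *m v^T) = inner v v * inner v v.
Proof.
rewrite /inner trmx_mul trmxK mxtrace_mulC !mulmxA.
rewrite -!mulmxA mxtrace_mulC !mulmxA -(mulmxA (v^T *m v)) tr11.
by rewrite !tr11 [LHS]mxE big_ord1.
Qed.

Lemma qf_bound k (E : 'M[R]_k) (v : 'cV[R]_k) :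
  inner v (E *m v) * inner v (E *m v) <= frob2 E * (inner v v * inner v v).
Proof.
have -> : inner v (E *m v) = inner E^T (v *m v^T).
  by rewrite /inner trmxK mxtrace_mulC mulmxA.
rewrite /frob2 -frob_rank1 -(inner_tr E); exact: inner_cs.
Qed.

End SecC.

Definition mkLin (R : fieldType) (U V : lmodType R) (f : U -> V) (pf : linear f)
  : {linear U -> V} := HB.pack f (GRing.isLinear.Build _ _ _ _ f pf).

Lemma mkLinE (R : fieldType) (U V : vectType R) (f : U -> V) (pf : linear f) x :
  linfun (mkLin pf) x = f x.
Proof. by rewrite lfunE. Qed.

Lemma max_exists (P : nat -> Prop) (N k0 : nat) : P k0 -> (forall k, P k -> (k <= N)%N) ->
  exists d, P d /\ forall k, P k -> (k <= d)%N.
Proof.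
elim: N => [|N IH] h0 hb.
  exists k0; split; first exact: h0.
  by move=> k /hb; rewrite leqn0 => /eqP ->.
case: (Classical_Prop.classic (P N.+1)) => hN.
  by exists N.+1; split.
apply: IH => // k hk; have := hb k hk; rewrite leq_eqVlt ltnS => /orP [/eqP ek|//].
by move: hN; rewrite -ek.
Qed.

Section Face.
Variable R : realType.
Variables (n m p : nat) (A : 'I_m -> 'M[R]_n) (b : 'cV[R]_m) (Y : 'M[R]_(n, p)) (L : 'M[R]_(p, n)).
Hypothesis hLY : L *m Y = 1%:M.
Hypothesis hY : Mp A b Y.

Definition Fc (X : 'M[R]_n) := feasC A b X /\ exists M, X = Y *m M *m Y^T.

Lemma YtLt : Y^T *m L^T = 1%:M.
Proof. by rewrite -trmx_mul hLY trmx1. Qed.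

Lemma LYML (M : 'M[R]_p) : L *m (Y *m M *m Y^T) *m L^T = M.
Proof. by rewrite !mulmxA hLY mul1mx -(mulmxA M) YtLt mulmx1. Qed.

Lemma psd_YMY (M : 'M[R]_p) : (forall v : 'cV[R]_p, 0 <= inner v (M *m v)) -> psd (Y *m M *m Y^T).
Proof. by move=> h v; rewrite qformE -!mulmxA inner_mulmx. Qed.

Lemma symm_YMY (M : 'M[R]_p) : symm M -> symm (Y *m M *m Y^T).
Proof. by move=> sM; rewrite /symm !trmx_mul trmxK sM mulmxA. Qed.

Lemma feasYY : feasC A b (Y *m Y^T).
Proof.
split; first by rewrite /symm trmx_mul trmxK.
split; first exact: hY.
by move=> v; rewrite qformE -mulmxA inner_mulmx inner_ge0.
Qed.

Lemma FcYY : Fc (Y *m Y^T).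
Proof. by split; [exact: feasYY | exists 1%:M; rewrite mulmx1]. Qed.

Lemma seg_lemma (P Q : 'M[R]_n) (M : 'M[R]_p) (c1 c2 : R) : symm P -> psd P -> psd Q ->
  0 < c1 -> 0 < c2 -> c1 *: P + c2 *: Q = Y *m M *m Y^T ->
  P = Y *m (L *m P *m L^T) *m Y^T.
Proof.
move=> sP pP pQ c1p c2p E.
set N := 1%:M - Y *m L.
have NY : N *m Y = 0 by rewrite mulmxBl mul1mx -mulmxA hLY mulmx1 subrr.
have hv : forall v : 'cV[R]_n, P *m (N^T *m v) = 0.
  move=> v; apply: psd0 => //.
  set w := N^T *m v.
  have h0 : inner w ((c1 *: P + c2 *: Q) *m w) = 0.
    by rewrite E -!mulmxA [Y^T *m (N^T *m v)]mulmxA -trmx_mul NY trmx0 mul0mx !mulmx0 inner0r.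
  move: h0; rewrite mulmxDl -!scalemxAl innerDr !innerZr.
  have := psd_qf w pP; have := psd_qf w pQ; move=> h1 h2 h3; nra.
have PN : P *m N^T = 0.
  apply/matrixP => i j; rewrite -mul_delta -mulmxA hv !mxE //.
have PE : P = P *m L^T *m Y^T.
  apply/eqP; rewrite -subr_eq0 -{1}(mulmx1 P) -mulmxA -trmx_mul -mulmxBr.
  by rewrite -trmx1 -linearB /= PN.
have PE2 : P = Y *m (L *m P).
  by rewrite -{1}sP {1}PE !trmx_mul !trmxK sP mulmxA.
by rewrite {1}PE2 {1}PE !mulmxA.
Qed.


Lemma Fc_conv : convexP Fc.
Proof.
move=> P Q t [[sP [aP pP]] [MP EP]] [[sQ [aQ pQ]] [MQ EQ]] t0 t1.
split; last first.
  exists ((1 - t) *: MP + t *: MQ).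
  by rewrite mulmxDr mulmxDl -!scalemxAr -!scalemxAl -EP -EQ.
split.
  by rewrite /symm linearD !linearZ /= sP sQ.
split; first by rewrite AopD !AopZ aP aQ -scalerDl subrK scale1r.
move=> v; rewrite qformE mulmxDl -!scalemxAl innerDr !innerZr.
have := psd_qf v pP; have := psd_qf v pQ => h1 h2.
apply: addr_ge0; apply: mulr_ge0 => //; lra.
Qed.

Lemma face_Fc : is_face (feasC A b) Fc.
Proof.
split; first by move=> X [].
split; first exact: Fc_conv.
move=> P Q hseg [t /andP [t0 t1] [_ [M EM]]].
have KP : feasC A b P.
  by have := hseg 0 (lexx _) ler01; rewrite subr0 scale1r scale0r addr0.
have KQ : feasC A b Q.
  by have := hseg 1 ler01 (lexx _); rewrite subrr scale0r add0r scale1r.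
case: (KP) => sP [_ pP]; case: (KQ) => sQ [_ pQ].
split; split => //.
  exists (L *m P *m L^T); apply: (@seg_lemma P Q M (1 - t) t) => //.
  by rewrite subr_gt0.
exists (L *m Q *m L^T); apply: (@seg_lemma Q P M t (1 - t)) => //.
  by rewrite subr_gt0.
by rewrite addrC.
Qed.


Lemma LYYL : L *m (Y *m Y^T) *m L^T = 1%:M.
Proof. by rewrite !mulmxA hLY mul1mx YtLt. Qed.

Definition Pi (D : 'M[R]_n) := Y *m (L *m D *m L^T) *m Y^T.

Lemma PiB D1 D2 : Pi (D1 - D2) = Pi D1 - Pi D2.
Proof. by rewrite /Pi mulmxBr mulmxBl mulmxBr mulmxBl. Qed.
Lemma PiD D1 D2 : Pi (D1 + D2) = Pi D1 + Pi D2.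
Proof. by rewrite /Pi mulmxDr mulmxDl mulmxDr mulmxDl. Qed.
Lemma PiZ a D : Pi (a *: D) = a *: Pi D.
Proof. by rewrite /Pi -scalemxAr -scalemxAl -scalemxAr -scalemxAl. Qed.
Lemma Pi0 : Pi 0 = 0.
Proof. by rewrite /Pi mulmx0 mul0mx mulmx0 mul0mx. Qed.

Lemma Fc_char X : Fc X -> symm X /\ Aop A X = b /\ X = Pi X.
Proof. by case=> [[sX [aX _]] [M EM]]; do 2!split => //; rewrite /Pi EM LYML. Qed.

Definition P0 (D : 'M[R]_n) := symm D /\ Aop A D = 0 /\ D = Pi D.

Lemma aff_char Z : in_aff Fc Z -> symm Z /\ Aop A Z = b /\ Z = Pi Z.
Proof.
case=> X0 [s [FX0 [Fs hZ]]].
have P0d : forall D, D \in diffs X0 s -> P0 D.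
  move=> D /mapP [W Ws ->].
  have [sW [aW eW]] := Fc_char (Fs W Ws).
  have [sX [aX eX]] := Fc_char FX0.
  split; first by rewrite /symm linearB /= sW sX.
  by rewrite AopB aW aX subrr PiB -eW -eX.
have P0Z : P0 (Z - X0).
  rewrite (@coord_span _ _ _ (in_tuple (diffs X0 s)) _ hZ).
  apply: (big_ind P0).
  - by rewrite /P0 /symm trmx0 Aop0 Pi0.
  - move=> D1 D2 [s1 [a1 e1]] [s2 [a2 e2]].
    by rewrite /P0 /symm linearD /= s1 s2 AopD a1 a2 addr0 PiD -e1 -e2.
  - move=> i _.
    have /P0d [s1 [a1 e1]] : (in_tuple (diffs X0 s))`_i \in diffs X0 s.
      by apply: mem_nth; exact: (ltn_ord i).
    by rewrite /P0 /symm linearZ /= s1 AopZ a1 scaler0 PiZ -e1.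
have [sX [aX eX]] := Fc_char FX0.
case: P0Z => s1 [a1 e1].
have -> : Z = X0 + (Z - X0) by rewrite addrC subrK.
split; first by rewrite /symm linearD /= sX s1.
by rewrite AopD aX a1 addr0 PiD -eX -e1.
Qed.

Lemma relint_Fc : relint Fc (Y *m Y^T).
Proof.
split; first exact: FcYY.
set g := frob2 (L *m L^T).
have g0 : 0 <= g by apply: inner_ge0.
exists (g + 1)^-1; first by rewrite invr_gt0; lra.
move=> Z hZ hd.
have [sZ [aZ EZ]] := aff_char hZ.
split; last by exists (L *m Z *m L^T).
split => //; split => //.
rewrite EZ /Pi; apply: psd_YMY => v.
set D := Z - Y *m Y^T.
have -> : L *m Z *m L^T = 1%:M + L *m D *m L^T.
  by rewrite /D mulmxBr mulmxBl LYYL addrC subrK.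
rewrite mulmxDl mul1mx innerDr -!mulmxA [inner v (L *m _)]inner_mulmx.
set w := L^T *m v.
have h1 := qf_bound D w.
have h2 := qf_bound (L *m L^T) v.
have e : inner v (L *m L^T *m v) = inner w w by rewrite -mulmxA inner_mulmx.
rewrite e in h2.
move: h1 h2; rewrite -/g.
set x := inner w (D *m w); set c := inner w w; set a := inner v v; set f := frob2 D.
move=> h1 h2.
have f0 : 0 <= f by apply: inner_ge0.
have a0 : 0 <= a by apply: inner_ge0.
have gp : 0 < g + 1 by lra.
have hf : f * (g + 1) < 1 by rewrite -ltr_pdivlMr // mul1r.
apply: (@scal_bound _ a (f * g)) => //.
- exact: mulr_ge0.
- nra.
- apply: (le_trans h1); rewrite -mulrA; apply: ler_wpM2l => //.
Qed.


Lemma phi_lin : linear (fun q : 'M[R]_(n, p) => q *m Y^T).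
Proof. by move=> a x y; rewrite mulmxDl -scalemxAl. Qed.

Definition phiF := linfun (mkLin phi_lin).

Lemma dim_face_lb (Q : {vspace 'M[R]_(n, p)}) :
  (forall q, q \in Q -> q = Y *m (L *m q) /\ symm (L *m q) /\ Aop A (q *m Y^T) = 0) ->
  exists X0 s, Fc X0 /\ (forall W, W \in s -> Fc W) /\ (\dim Q <= \dim <<diffs X0 s>>)%N.
Proof.
move=> HQ.
set B := vbasis Q.
pose eps (q : 'M[R]_(n, p)) := (frob2 (L *m q) + 1)^-1.
exists (Y *m Y^T), [seq Y *m Y^T + eps q *: (q *m Y^T) | q <- B].
split; first exact: FcYY.
split.
  move=> W /mapP [q qB ->].
  have [Eq [sq aq]] := HQ q (vbasis_mem qB).
  set e := eps q.
  have EW : Y *m Y^T + e *: (q *m Y^T) = Y *m (1%:M + e *: (L *m q)) *m Y^T.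
    by rewrite mulmxDr mulmx1 mulmxDl -scalemxAr -scalemxAl -Eq.
  split; last by exists (1%:M + e *: (L *m q)).
  split; first by rewrite EW; apply: symm_YMY; rewrite /symm linearD linearZ /= trmx1 sq.
  split; first by rewrite AopD AopZ hY aq scaler0 addr0.
  rewrite EW; apply: psd_YMY => v.
  rewrite mulmxDl mul1mx -scalemxAl innerDr innerZr.
  have h1 := qf_bound (L *m q) v.
  set f := frob2 (L *m q) in h1.
  set y := inner v (L *m q *m v) in h1 *.
  set a := inner v v in h1 *.
  have f0 : 0 <= f by apply: inner_ge0.
  have a0 : 0 <= a by apply: inner_ge0.
  have e0 : 0 < e by rewrite /e /eps invr_gt0 -/f; lra.
  have fp : 0 < f + 1 by lra.
  have ef : e * (f + 1) = 1 by rewrite /e /eps -/f mulVf // lt0r_neq0.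
  have e1 : e * (e * f) < 1 by nra.
  apply: (@scal_bound _ a (e * (e * f))) => //.
  - by apply: mulr_ge0; [lra | nra].
  - have : e * e * (y * y) <= e * e * (f * (a * a)) by apply: ler_wpM2l => //; nra.
    by move=> h; apply: (le_trans _ (le_trans h _)); [rewrite le_eqVlt; apply/orP; left; apply/eqP; ring | rewrite le_eqVlt; apply/orP; left; apply/eqP; ring].
have -> : diffs (Y *m Y^T) [seq Y *m Y^T + eps q *: (q *m Y^T) | q <- B]
    = [seq eps q *: (q *m Y^T) | q <- B].
  by rewrite /diffs -map_comp; apply: eq_map => q /=; rewrite addrC addKr.
have inj : (Q :&: lker phiF = 0)%VS.
  apply/eqP; rewrite -subv0; apply/subvP => x /memv_capP [xQ]; rewrite memv_ker mkLinE memv0 => /eqP x0.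
  have [Ex _] := HQ x xQ.
  have Lx : L *m x = 0.
    by rewrite -[L *m x]mulmx1 -YtLt mulmxA -(mulmxA L x) x0 mulmx0 mul0mx.
  by rewrite Ex Lx mulmx0.
apply: (@leq_trans (\dim (phiF @: Q))); first by rewrite limg_dim_eq.
have EQ : (phiF @: Q = <<map phiF B>>)%VS by rewrite -limg_span (span_basis (vbasisP Q)).
rewrite EQ; apply: dimvS; apply/span_subvP => x /mapP [q qB ->].
rewrite mkLinE.
have e0 : eps q != 0 by rewrite invr_eq0; have := inner_ge0 (L *m q); rewrite /frob2; lra.
rewrite -[q *m Y^T](scalerK e0) memvZ // memv_span //.
by apply/mapP; exists q.
Qed.


Lemma affdim_Fc (Q : {vspace 'M[R]_(n, p)}) :
  (forall q, q \in Q -> q = Y *m (L *m q) /\ symm (L *m q) /\ Aop A (q *m Y^T) = 0) ->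
  exists d, affdim Fc d /\ (\dim Q <= d)%N.
Proof.
move=> HQ.
pose P k := exists X0 s, Fc X0 /\ (forall W, W \in s -> Fc W) /\ \dim <<diffs X0 s>> = k.
have [d [Pd Hd]] : exists d, P d /\ forall k, P k -> (k <= d)%N.
  apply: (@max_exists P (n * n)%N 0%N).
    by exists (Y *m Y^T), [::]; split; [exact: FcYY | split => //; rewrite span_nil dimv0].
  move=> k [X0 [s [_ [_ <-]]]].
  by apply: (leq_trans (dimvS (subvf _))); rewrite dimvf dim_matrix.
exists d; split.
  split => // X0 s h1 h2; apply: Hd; by exists X0, s.
have [X0 [s [h1 [h2 h3]]]] := dim_face_lb HQ.
by apply: (leq_trans h3); apply: Hd; exists X0, s.
Qed.

End Face.

Section Sym.
Variable R : realType.
Variable p : nat.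

Lemma tau_lin : linear (fun M : 'M[R]_p => M + M^T).
Proof. by move=> a x y; rewrite linearD linearZ /= scalerDr addrACA. Qed.
Definition tauF := linfun (mkLin tau_lin).

Definition theta (K : 'M[R]_p) : 'M[R]_p :=
  \matrix_(i, j) (if (i < j)%N then K i j else if (j < i)%N then K j i else 0).
Lemma theta_lin : linear theta.
Proof.
move=> a x y; apply/matrixP => i j; rewrite !mxE.
by case: ifP => _; rewrite ?mxE //; case: ifP => _; rewrite ?mxE ?mulr0 ?addr0.
Qed.
Definition thetaF := linfun (mkLin theta_lin).

Lemma dg_lin : linear (fun d : 'rV[R]_p => diag_mx d).
Proof. exact: diag_mx_is_linear. Qed.
Definition dgF := linfun (mkLin dg_lin).

Lemma in_limg_tau (Z : 'M[R]_p) : Z^T = Z -> Z \in limg tauF.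
Proof.
move=> sZ; have -> : Z = tauF (2^-1 *: Z).
  rewrite mkLinE linearZ /= sZ -scalerDl.
  have -> : (2^-1 + 2^-1 : R) = 1 by lra.
  by rewrite scale1r.
exact: memv_img (memvf _).
Qed.

Lemma dim_sym : (p * p + p <= 2 * \dim (limg tauF))%N.
Proof.
set Sk := lker tauF.
have h1 := limg_ker_dim tauF fullv.
rewrite capfv dimvf dim_matrix in h1.
set V1 := (thetaF @: Sk)%VS.
set V2 := limg dgF.
have hsub : (V1 + V2 <= limg tauF)%VS.
  rewrite subv_add; apply/andP; split; apply/subvP => x /memv_imgP [y _ ->];
    apply: in_limg_tau; rewrite mkLinE.
    apply/matrixP => i j; rewrite !mxE.
    by case: (ltngtP i j) => // eij; apply: congr1; apply: val_inj.
  exact: tr_diag_mx.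
have hdis : (V1 :&: V2 = 0)%VS.
  apply/eqP; rewrite -subv0; apply/subvP => x /memv_capP [].
  move=> /memv_imgP [K _ ->] /memv_imgP [d _]; rewrite !mkLinE memv0 => e.
  apply/eqP/matrixP => i j.
  have [eij|nij] := eqVneq i j.
    by subst j; rewrite !mxE ltnn.
  by rewrite e !mxE (negbTE nij) mulr0n.
have dV1 : \dim V1 = \dim Sk.
  apply: limg_dim_eq; apply/eqP; rewrite -subv0; apply/subvP => K /memv_capP [].
  rewrite !memv_ker !mkLinE memv0 => /eqP hK /eqP hT.
  apply/eqP/matrixP => i j; rewrite mxE.
  have hs : forall i j, K i j + K j i = 0.
    by move=> i' j'; have := congr1 (fun M : 'M[R]_p => M i' j') hK; rewrite !mxE.
  have ht : forall i j, theta K i j = 0.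
    by move=> i' j'; rewrite hT mxE.
  case: (ltngtP i j) => hij.
  - by have := ht i j; rewrite mxE hij.
  - have := ht i j; rewrite mxE ltnNge (ltnW hij) /= hij => h.
    by have := hs i j; rewrite h addr0.
  - have := hs i j; rewrite (val_inj hij) => h.
    have : 2 * K j j = 0 by rewrite mulr2n mulrDl mul1r h.
    by move/eqP; rewrite mulf_eq0 pnatr_eq0 /= => /eqP.
have dV2 : \dim V2 = p.
  rewrite /V2 limg_dim_eq ?dimvf ?dim_matrix; first exact: mul1n.
  apply/eqP; rewrite -subv0; apply/subvP => d /memv_capP [_].
  rewrite memv_ker mkLinE memv0 => /eqP hd.
  apply/eqP/matrixP => i j; rewrite (ord1 i) mxE.
  by have := congr1 (fun M : 'M[R]_p => M j j) hd; rewrite !mxE eqxx mulr1n.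
have := dimvS hsub; rewrite dimv_disjoint_sum // dV1 dV2.
move: h1; rewrite -/Sk; lia.
Qed.

End Sym.

Section Core.
Variable R : realType.
Variables (n m p m' : nat) (A : 'I_m -> 'M[R]_n) (b : 'cV[R]_m) (Y : 'M[R]_(n, p))
  (L : 'M[R]_(p, n)) (u : 'cV[R]_n).
Hypothesis hLY : L *m Y = 1%:M.
Hypothesis hY : Mp A b Y.
Hypothesis hu : ~~ (u^T <= Y^T)%MS.
Hypothesis hm : \dim (AYspan A Y) = m'.
Hypothesis hF : forall (F : 'M[R]_n -> Prop) (d : nat),
  is_face (feasC A b) F -> relint F (Y *m Y^T) -> affdim F d ->
  (d + m' < (p * (p + 1)) %/ 2 + p)%N.

Lemma sigma_lin : linear (fun M : 'M[R]_p => Y *m (M + M^T)).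
Proof.
move=> a x y; have -> : (a *: x + y)^T = a *: x^T + y^T by rewrite linearD linearZ.
by rewrite !mulmxDr -!scalemxAr scalerDr addrACA.
Qed.
Definition sigmaF := linfun (mkLin sigma_lin).

Lemma rho_lin : linear (fun r : 'rV[R]_p => u *m r).
Proof. by move=> a x y; rewrite mulmxDr -scalemxAr. Qed.
Definition rhoF := linfun (mkLin rho_lin).

Let W := AYspan A Y.
Let wb := vbasis W.

Definition fp (Yd : 'M[R]_(n, p)) : 'rV[R]_(\dim W) := \row_k inner (tnth wb k) Yd.
Lemma fp_lin : linear fp.
Proof. by move=> a x y; apply/matrixP => i j; rewrite !mxE innerDr innerZr. Qed.
Definition fpF := linfun (mkLin fp_lin).

Lemma kerT Yd : Yd \in lker fpF -> forall i, inner (A i *m Y) Yd = 0.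
Proof.
rewrite memv_ker mkLinE => /eqP h0 i.
have hi : A i *m Y \in <<wb>>%VS.
  rewrite (span_basis (vbasisP W)); apply: memv_span.
  by apply/mapP; exists i; rewrite ?mem_enum.
rewrite (coord_span hi) inner_sym inner_sumr big1 // => k _.
rewrite innerZr inner_sym -(tnth_nth 0).
have := congr1 (fun M : 'rV[R]_(\dim W) => M 0 k) h0; rewrite !mxE => ->.
by rewrite mulr0.
Qed.


Lemma inner_mulmxr (k l q : nat) (U : 'M[R]_(k, l)) (V : 'M[R]_(k, q)) (X : 'M[R]_(q, l)) :
  inner U (V *m X) = inner (U *m X^T) V.
Proof. by rewrite /inner mulmxA mxtrace_mulC mulmxA trmx_mul trmxK. Qed.

Lemma core : exists (K : 'M[R]_p) (r : 'rV[R]_p), r != 0 /\ TY A Y (Y *m K + u *m r).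
Proof.
set U1 := limg sigmaF. set U2 := limg rhoF. set Q := (U1 :&: lker fpF)%VS.
have HQ : forall q, q \in Q -> q = Y *m (L *m q) /\ symm (L *m q) /\ Aop A (q *m Y^T) = 0.
  move=> q /memv_capP [/memv_imgP [M _ ->] qk].
  have := kerT qk; rewrite mkLinE => hk.
  have LS : L *m (Y *m (M + M^T)) = M + M^T by rewrite mulmxA hLY mul1mx.
  rewrite LS; split => //; split.
    by rewrite /symm linearD /= trmxK addrC.
  apply/matrixP => i j; rewrite (ord1 j) !mxE.
  by rewrite inner_mulmxr trmxK hk.
have [d [hd hQd]] := affdim_Fc hLY hY HQ.
have hdm := hF (face_Fc A b hLY) (relint_Fc hLY hY) hd.
have u0 : u != 0 by apply: contraNneq hu => ->; rewrite trmx0 sub0mx.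
have hsym := dim_sym R p.
have hU1 : (\dim (limg (tauF R p)) <= \dim U1)%N.
  have h1 := limg_ker_dim sigmaF fullv.
  have h2 := limg_ker_dim (tauF R p) fullv.
  rewrite !capfv in h1 h2.
  have : (\dim (lker sigmaF) <= \dim (lker (tauF R p)))%N.
    apply: dimvS; apply/subvP => M; rewrite !memv_ker !mkLinE => /eqP h; apply/eqP.
    by rewrite -[M + M^T]mul1mx -hLY -mulmxA h mulmx0.
  move: h1 h2; rewrite -/U1; lia.
have hU2 : \dim U2 = p.
  rewrite /U2 limg_dim_eq ?dimvf ?dim_matrix; first exact: mul1n.
  apply/eqP; rewrite -subv0; apply/subvP => r /memv_capP [_].
  rewrite memv_ker mkLinE memv0 => /eqP h.
  have : (u^T *m u) *m r = 0 by rewrite -mulmxA h mulmx0.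
  rewrite [u^T *m u]mx11_scalar mul_scalar_mx => /eqP; rewrite scaler_eq0 => /orP [|//].
  rewrite -inner_cv => /eqP /inner_eq0 /eqP; by rewrite (negbTE u0).
have hdis : (U1 :&: U2 = 0)%VS.
  apply/eqP; rewrite -subv0; apply/subvP => x /memv_capP [/memv_imgP [M _ ->] /memv_imgP [r _]].
  rewrite !mkLinE memv0 => e; rewrite e.
  have [r0|rn0] := eqVneq r 0; first by rewrite r0 mulmx0.
  exfalso; move/negP: hu; apply.
  set c := (r *m r^T) 0 0.
  have c0 : c != 0.
    have ci : c = inner r^T r^T by rewrite /c inner_cv trmxK.
    apply: contra rn0; rewrite ci => /eqP /inner_eq0 h.
    by rewrite -[r]trmxK h trmx0.
  have E1 : Y *m (M + M^T) *m r^T = c *: u.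
    by rewrite e -mulmxA [r *m r^T]mx11_scalar mul_mx_scalar.
  have -> : u = c^-1 *: (Y *m (M + M^T) *m r^T) by rewrite E1 scalerA mulVf // scale1r.
  apply/submxP; exists (c^-1 *: ((M + M^T) *m r^T)^T).
  by rewrite linearZ /= -scalemxAl -mulmxA trmx_mul.
have hdimU : \dim (U1 + U2) = (\dim U1 + p)%N by rewrite dimv_disjoint_sum // hU2.
have hker := limg_ker_dim fpF (U1 + U2)%VS.
have him : (\dim (fpF @: (U1 + U2)) <= m')%N.
  apply: (leq_trans (dimvS (subvf _))); rewrite dimvf dim_matrix.
  by rewrite -[X in (X <= _)%N]/(1 * \dim W)%N mul1n hm.
case: (boolP ((U1 + U2) :&: lker fpF <= U1)%VS) => hsub.
  exfalso.
  have : ((U1 + U2) :&: lker fpF <= Q)%VS by rewrite subv_cap hsub capvSr.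
  move/dimvS => h.
  have e2 : (p * (p + 1) = p * p + p)%N by rewrite mulnDr muln1.
  move: hdm; rewrite e2.
  move: hsym hU1 hQd h hker hdimU him.
  set pp := (p * p)%N.
  move=> h1 h2 h3 h4 h5 h6 h7.
  have h8 : (pp + p <= 2 * \dim U1)%N by lia.
  have h9 : ((pp + p) %/ 2 <= \dim U1)%N.
    by have := leq_div2r 2 h8; rewrite mulKn.
  have h10 : (\dim ((U1 + U2) :&: lker fpF) <= d)%N by exact: leq_trans h4 h3.
  have h11 : (\dim U1 + p <= d + m')%N by lia.
  move: h9; set z := ((pp + p) %/ 2)%N; lia.
case/subvPn: hsub => y /memv_capP [yU yk] ny.
case/memv_addP: yU => y1 /memv_imgP [M _ ->] [y2 /memv_imgP [r _ ->] ey].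
exists (M + M^T), r; split.
  apply: contraNneq ny => r0; rewrite ey r0 linear0 addr0.
  exact: memv_img (memvf _).
by move=> i; have := kerT yk i; rewrite ey !mkLinE.
Qed.

End Core.

Lemma inner_Aadj (R : realType) n m (A : 'I_m -> 'M[R]_n) (nu : 'cV[R]_m) X :
  inner (Aadj A nu) X = \sum_i nu i 0 * (Aop A X) i 0.
Proof.
rewrite /Aadj inner_sym inner_sumr; apply: eq_bigr => i _.
by rewrite innerZr mxE inner_sym.
Qed.

Unset Implicit Arguments.
Theorem theorem3 (R : realType) (n m p m' : nat)
  (A : 'I_m -> 'M[R]_n) (b : 'cV[R]_m) (C : 'M[R]_n) :
  (forall i, symm (A i)) -> symm C ->
  Assumption1 p A b ->
  (forall Y : 'M[R]_(n, p), Mp A b Y -> \dim (AYspan A Y) = m') ->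
  forall Y : 'M[R]_(n, p), Mp A b Y -> soc A C Y ->
  ((\rank Y < p)%N \/
   (\rank Y = p /\
    forall (F : 'M[R]_n -> Prop) (d : nat),
      is_face (feasC A b) F -> relint F (Y *m Y^T) -> affdim F d ->
      (d + m' < (p * (p + 1)) %/ 2 + p)%N)) ->
  (forall Z : 'M[R]_(n, p), Mp A b Z -> gobj C Y <= gobj C Z) /\
  feasC A b (Y *m Y^T) /\
  (forall X : 'M[R]_n, feasC A b X -> inner C (Y *m Y^T) <= inner C X).
Proof.
move=> hA hC _ hm' Y hY [H [_ [hSY hSO]]] hcase.
set mu := H *m Aop A (C *m Y *m Y^T).
set S := Smat A C Y H.
have sS : symm S.
  rewrite /symm /S /Smat linearB /= hC -/mu /Aadj linear_sum /=.
  by congr (_ - _); apply: eq_bigr => i _; rewrite linearZ /= hA.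
have YtS : Y^T *m S = 0 by rewrite -sS -trmx_mul hSY trmx0.
have dir : forall (v : 'cV[R]_n) (K : 'M[R]_p) (r : 'rV[R]_p), r != 0 ->
    TY A Y (Y *m K + v *m r) -> 0 <= (v^T *m S *m v) 0 0.
  move=> v K r rn0 hT.
  have := hSO _ hT.
  rewrite mulmxDr mulmxA hSY mul0mx add0r innerDl.
  rewrite [inner (Y *m K) _]inner_mulmx sS mulmxA hSY mul0mx inner0l add0r.
  set c := (r *m r^T) 0 0.
  have ci : c = inner r^T r^T by rewrite /c inner_cv trmxK.
  have cpos : 0 < c.
    rewrite lt_def ci inner_ge0 andbT; apply: contra rn0 => /eqP /inner_eq0 h.
    by rewrite -[r]trmxK h trmx0.
  have -> : inner (v *m r) (S *m (v *m r)) = (v^T *m S *m v) 0 0 * c.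
    rewrite /inner trmx_mul -!mulmxA mxtrace_mulC -!mulmxA.
    rewrite !mulmxA -(mulmxA (v^T *m S *m v)) tr11 [LHS]mxE big_ord1 //.
  by rewrite pmulr_lge0.
have psdS : psd S.
  move=> v; case: hcase => [hr|[hr hF]].
    set Kr := kermx Y^T.
    have : Kr != 0.
      apply/eqP => h; have := mxrank_ker Y^T; rewrite -/Kr h mxrank0 mxrank_tr.
      by move=> /esym /eqP; rewrite subn_eq0 leqNgt hr.
    move=> Kn0.
    have KY : Kr *m Y^T = 0 by exact: mulmx_ker.
    clearbody Kr.
    have [i [j nij]] : exists i j, Kr i j != 0.
      case: (boolP [exists i, [exists j, Kr i j != 0]]) => [/existsP [i /existsP [j nij]]|hno].
        by exists i, j.
      exfalso; move/eqP: Kn0; apply; apply/matrixP => i j; rewrite mxE.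
      move: hno; rewrite negb_exists => /forallP /(_ i); rewrite negb_exists => /forallP /(_ j).
      by rewrite negbK => /eqP.
    set r := row i Kr.
    have rn0 : r != 0 by apply: contraNneq nij => h; have := congr1 (fun M : 'rV[R]_p => M 0 j) h; rewrite !mxE => ->.
    have rY : r *m Y^T = 0 by rewrite /r -row_mul KY row0.
    apply: (dir v 0 r rn0) => k.
    rewrite mulmx0 add0r inner_mulmxr -mulmxA.
    by rewrite -[Y *m r^T]trmxK trmx_mul trmxK rY trmx0 mulmx0 inner0l.
  have [B hB] : exists B, Y^T *m B = 1%:M.
    by apply/row_freeP; rewrite /row_free mxrank_tr hr.
  set L := B^T.
  have hLY : L *m Y = 1%:M by rewrite /L -(trmxK Y) -trmx_mul hB trmx1.
  case: (boolP (v^T <= Y^T)%MS) => hv.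
    case/submxP: hv => D hD.
    by rewrite hD -(mulmxA D) YtS mulmx0 mul0mx mxE.
  have [K [r [rn0 hT]]] := core hLY hY hv (hm' Y hY) hF.
  exact: dir v K r rn0 hT.
have key : forall X, Aop A X = b -> inner C X = inner S X + \sum_i mu i 0 * b i 0.
  move=> X hX.
  have -> : C = S + Aadj A mu by rewrite /S /Smat -/mu subrK.
  by rewrite innerDl inner_Aadj hX.
have sdp : forall X, feasC A b X -> inner C (Y *m Y^T) <= inner C X.
  move=> X [sX [aX pX]]; rewrite !key //.
  have -> : inner S (Y *m Y^T) = 0 by rewrite /inner sS mulmxA hSY mul0mx mxtrace0.
  rewrite add0r lerDr /inner sS.
  exact: tr_psd psdS sX pX.
have gE : forall Z : 'M[R]_(n, p), gobj C Z = inner C (Z *m Z^T).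
  by move=> Z; rewrite /gobj inner_mulmxr trmxK.
split.
  by move=> Z hZ; rewrite !gE; apply: sdp; exact: feasYY hZ.
split; first exact: feasYY hY.
exact: sdp.
Qed.
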